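(* For every prime power $q$, the equation $M_q\!\left(\frac{q-1}{x(q+1)}\right)=\frac{1}{x(q+1)}$ has a unique solution $x=c_q$ with $x\ge 1$. Moreover $c_q>1$.
   Context: $H_q(x)=x\log_q(q-1)-x\log_q x-(1-x)\log_q(1-x)$ is the $q$-ary entropy and $M_q(\delta)=H_q\!\left(\frac1q\left(q-1-(q-2)\delta-2\sqrt{(q-1)\delta(1-\delta)}\right)\right)$. $M_q$ is continuous and strictly decreasing on $[0,1-1/q]$ with $M_q(0)=1$ and $M_q(1-1/q)=0$. *)

(* Defs.v *)
From Stdlib Require Import Reals ZArith Znumtheory.
Open Scope R_scope.

Definition logb (q y : R) : R := ln y / ln q.

(* q-ary entropy H_q(x) = x log_q(q-1) - x log_q x - (1-x) log_q(1-x).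
   Note: Stdlib's ln 0 = 0, so the convention 0 * log 0 = 0 holds. *)
Definition Hq (q x : R) : R :=
  x * logb q (q - 1) - x * logb q x - (1 - x) * logb q (1 - x).

Definition Mq (q delta : R) : R :=
  Hq q ((q - 1 - (q - 2) * delta - 2 * sqrt ((q - 1) * delta * (1 - delta))) / q).

Definition prime_power (q : nat) : Prop :=
  exists p k : nat, prime (Z.of_nat p) /\ (1 <= k)%nat /\ q = (p ^ k)%nat.

(* Main.v *)
Require Import Defs.
From Stdlib Require Import Reals Lra Psatz ZArith Znumtheory.
From Coquelicot Require Import Coquelicot.
Open Scope R_scope.

Lemma ln_le' x y : 0 < x -> x <= y -> ln x <= ln y.
Proof. intros Hx [H|H]. left; apply ln_increasing; auto. subst; lra. Qed.

Lemma ln_sub1 y : 0 < y -> ln y <= y - 1.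
Proof.
  intros Hy. destruct (Req_dec (ln y) 0) as [E|E].
  - rewrite E. assert (y = 1). { rewrite <- (exp_ln y Hy), E, exp_0. auto. } lra.
  - pose proof (exp_ineq1 _ E). rewrite exp_ln in H; lra.
Qed.

Definition gq (Q d : R) := (Q - 1 - (Q - 2) * d - 2 * sqrt ((Q - 1) * d * (1 - d))) / Q.

Lemma gq_sq Q d : 0 <= d <= 1 -> 1 < Q ->
  gq Q d = (sqrt ((Q - 1) * (1 - d)) - sqrt d) ^ 2 / Q.
Proof.
  intros Hd HQ. unfold gq.
  replace ((Q - 1) * d * (1 - d)) with ((Q - 1) * (1 - d) * d) by ring.
  rewrite sqrt_mult by nra.
  assert (Ha := sqrt_sqrt ((Q - 1) * (1 - d)) ltac:(nra)).
  assert (Hb := sqrt_sqrt d ltac:(lra)).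
  set (a := sqrt ((Q - 1) * (1 - d))) in *. set (b := sqrt d) in *.
  replace ((a - b) ^ 2) with (a * a - 2 * (a * b) + b * b) by ring.
  rewrite Ha, Hb. field. lra.
Qed.

Lemma gq_bounds Q d : 2 <= Q -> 0 < d < (Q - 1) / Q -> 0 < gq Q d < (Q - 1) / Q.
Proof.
  intros HQ Hd.
  assert (HdQ : d * Q < Q - 1) by (assert ((Q-1)/Q*Q = Q-1) by (field; lra); nra).
  assert (d < 1) by nra.
  rewrite gq_sq by lra.
  assert (H1 : sqrt d < sqrt ((Q - 1) * (1 - d))) by (apply sqrt_lt_1; nra).
  assert (H2 : sqrt ((Q - 1) * (1 - d)) < sqrt (Q - 1)) by (apply sqrt_lt_1; nra).
  assert (H3 := sqrt_lt_R0 d ltac:(lra)).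
  assert (H4 := sqrt_sqrt (Q - 1) ltac:(lra)).
  split.
  - apply Rdiv_lt_0_compat; [|lra]. nra.
  - unfold Rdiv. apply Rmult_lt_compat_r. apply Rinv_0_lt_compat; lra. nra.
Qed.

Lemma gq_decr Q d1 d2 : 2 <= Q -> 0 < d1 -> d1 < d2 -> d2 < (Q - 1) / Q -> gq Q d2 < gq Q d1.
Proof.
  intros HQ H1 H12 H2.
  assert (HdQ : d2 * Q < Q - 1) by (assert ((Q-1)/Q*Q = Q-1) by (field; lra); nra).
  assert (d2 < 1) by nra.
  rewrite !gq_sq by lra.
  assert (A1 : sqrt d2 < sqrt ((Q - 1) * (1 - d2))) by (apply sqrt_lt_1; nra).
  assert (A2 : sqrt ((Q - 1) * (1 - d2)) < sqrt ((Q - 1) * (1 - d1))) by (apply sqrt_lt_1; nra).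
  assert (A3 : sqrt d1 < sqrt d2) by (apply sqrt_lt_1; lra).
  assert (H3 := sqrt_lt_R0 d1 ltac:(lra)).
  unfold Rdiv. apply Rmult_lt_compat_r. apply Rinv_0_lt_compat; lra. nra.
Qed.

Lemma c_plus (f g : R -> R) x : continuous f x -> continuous g x -> continuous (fun y => f y + g y) x.
Proof. intros; exact (continuous_plus f g x H H0). Qed.
Lemma c_mult (f g : R -> R) x : continuous f x -> continuous g x -> continuous (fun y => f y * g y) x.
Proof. intros; exact (continuous_mult f g x H H0). Qed.
Lemma c_opp (f : R -> R) x : continuous f x -> continuous (fun y => - f y) x.
Proof. intros; exact (continuous_opp f x H). Qed.
Lemma c_minus (f g : R -> R) x : continuous f x -> continuous g x -> continuous (fun y => f y - g y) x.
Proof. intros; apply c_plus; [|apply c_opp]; auto. Qed.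
Lemma c_const (c : R) x : continuous (fun _ : R => c) x.
Proof. apply continuous_const. Qed.
Lemma c_id x : continuous (fun y : R => y) x.
Proof. apply continuous_id. Qed.
Lemma c_div_const (f : R -> R) c x : continuous f x -> continuous (fun y => f y / c) x.
Proof. intros; unfold Rdiv; apply c_mult; auto; apply c_const. Qed.


Lemma gq_cont Q d : continuous (gq Q) d.
Proof.
  unfold gq. apply c_div_const. apply c_minus. apply c_minus. apply c_const.
  apply c_mult. apply c_const. apply c_id.
  apply c_mult. apply c_const. apply continuous_sqrt_comp.
  apply c_mult. apply c_mult. apply c_const. apply c_id. apply c_minus. apply c_const. apply c_id.
Qed.

Lemma Hq_derive Q y : 0 < y < 1 -> 0 < ln Q ->
  is_derive (Hq Q) y ((ln (Q - 1) - ln y + ln (1 - y)) / ln Q).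
Proof.
  intros Hy HL. unfold Hq, logb. auto_derive.
  - lra.
  - unfold Rminus. field. repeat split; lra.
Qed.

Lemma lnQ_pos Q : 2 <= Q -> 0 < ln Q.
Proof. intros; rewrite <- ln_1; apply ln_increasing; lra. Qed.

Lemma Hq_incr Q a b : 2 <= Q -> 0 < a -> a < b -> b <= (Q - 1) / Q -> Hq Q a < Hq Q b.
Proof.
  intros HQ Ha Hab Hb.
  assert (HL := lnQ_pos Q HQ).
  assert (HbQ : b * Q <= Q - 1) by (assert ((Q-1)/Q*Q = Q-1) by (field; lra); nra).
  destruct (MVT_cor2 (Hq Q) (fun y => (ln (Q - 1) - ln y + ln (1 - y)) / ln Q) a b Hab)
    as [c [Hc1 Hc2]].
  { intros c Hc. apply is_derive_Reals. apply Hq_derive; auto. split; nra. }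
  assert (Hpos : 0 < (ln (Q - 1) - ln c + ln (1 - c)) / ln Q).
  { apply Rdiv_lt_0_compat; auto.
    assert (ln c < ln ((Q - 1) * (1 - c))) by (apply ln_increasing; nra).
    rewrite ln_mult in H by nra. lra. }
  nra.
Qed.

Lemma Hq_top Q : 2 <= Q -> Hq Q ((Q - 1) / Q) = 1.
Proof.
  intros HQ. assert (HL := lnQ_pos Q HQ). unfold Hq, logb.
  replace (1 - (Q - 1) / Q) with (/ Q) by (field; lra).
  rewrite ln_Rinv by lra. rewrite ln_div by lra. field. lra.
Qed.

Lemma key_ineq Q L c l2 l3 : (Q = 2 /\ L = l2 \/ 3 <= Q /\ l3 <= L) ->
  1/6 <= c <= 0.172 -> 1/2 < l2 <= 1 -> 1 <= l3 <= 2 ->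
  (Q - 1) * c * (2 * L + / Q + l2 + l3 + 1) < Q * L.
Proof.
  intros [[-> ->]|[HQ HL]] Hc H2 H3.
  - replace (/2) with (1/2) by field. nra.
  - assert (/ Q <= 1/3). { replace (1/3) with (/3) by field. apply Rinv_le_contravar; lra. }
    assert (HX : c * (2 * L + / Q + l2 + l3 + 1) < L).
    { assert (c * (2 * L + / Q + l2 + l3 + 1) <= c * (3 * L + 1/3 + 2)).
      { apply Rmult_le_compat_l; lra. }
      nra. }
    nra.
Qed.

Lemma sqrt2_bounds : 1.414 <= sqrt 2 <= 17/12.
Proof.
  pose proof (sqrt_sqrt 2 ltac:(lra)). pose proof (sqrt_pos 2). nra.
Qed.

Lemma f1_neg Q : (Q = 2 \/ 3 <= Q) ->
  Mq Q ((Q - 1) / (1 * (Q + 1))) < 1 / (1 * (Q + 1)).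
Proof.
  intros HQc. assert (HQ : 2 <= Q) by lra.
  assert (HL := lnQ_pos Q HQ).
  rewrite !Rmult_1_l.
  set (s := sqrt 2). pose proof sqrt2_bounds as Hs. fold s in Hs.
  set (c := 3 - 2 * s).
  assert (Hc : 1/6 <= c <= 0.172) by (unfold c; lra).
  assert (Hsq : sqrt ((Q - 1) * ((Q - 1) / (Q + 1)) * (1 - (Q - 1) / (Q + 1))) = s * ((Q - 1) / (Q + 1))).
  { replace ((Q - 1) * ((Q - 1) / (Q + 1)) * (1 - (Q - 1) / (Q + 1)))
      with (2 * (((Q - 1) / (Q + 1)) * ((Q - 1) / (Q + 1)))) by (field; lra).
    assert (0 <= (Q - 1) / (Q + 1)) by (left; apply Rdiv_lt_0_compat; lra).
    rewrite sqrt_mult by nra. rewrite sqrt_square by lra. reflexivity. }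
  unfold Mq. rewrite Hsq.
  set (g := (Q - 1 - (Q - 2) * ((Q - 1) / (Q + 1)) - 2 * (s * ((Q - 1) / (Q + 1)))) / Q).
  assert (Hg : g = (Q - 1) * c / (Q * (Q + 1))) by (unfold g, c; field; lra).
  assert (Hg0 : 0 < g) by (rewrite Hg; apply Rdiv_lt_0_compat; nra).
  assert (Hg1 : g < 1).
  { rewrite Hg. apply (Rmult_lt_reg_r (Q * (Q + 1))); [nra|].
    unfold Rdiv; rewrite Rmult_assoc, Rinv_l by nra. nra. }
  assert (Hlng : ln g = ln (Q - 1) + ln c - ln Q - ln (Q + 1)).
  { rewrite Hg, ln_div, !ln_mult by nra. ring. }
  assert (Hlnc : - ln c <= ln 2 + ln 3).
  { rewrite <- ln_mult by lra. replace (2 * 3) with (/ (1/6)) by field.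
    rewrite ln_Rinv by lra. assert (ln (1/6) <= ln c) by (apply ln_le'; lra). lra. }
  assert (Hent : - (1 - g) * ln (1 - g) <= g).
  { pose proof (ln_sub1 (/ (1 - g)) ltac:(apply Rinv_0_lt_compat; lra)).
    rewrite ln_Rinv in H by lra.
    assert ((1 - g) * (- ln (1 - g)) <= (1 - g) * (/ (1 - g) - 1)) by (apply Rmult_le_compat_l; lra).
    replace ((1 - g) * (/ (1 - g) - 1)) with g in H0 by (field; lra). lra. }
  assert (HQ1 : ln (Q + 1) <= ln Q + / Q).
  { pose proof (ln_sub1 ((Q + 1) / Q) ltac:(apply Rdiv_lt_0_compat; lra)).
    rewrite ln_div in H by lra. replace ((Q + 1) / Q - 1) with (/ Q) in H by (field; lra). lra. }
  assert (H2 : 1/2 < ln 2 <= 1).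
  { split. pose proof ln_lt_2; lra. pose proof (ln_sub1 2); lra. }
  assert (H3 : 1 <= ln 3 <= 2).
  { split. rewrite <- (ln_exp 1). apply ln_le'. apply exp_pos. apply exp_le_3.
    pose proof (ln_sub1 3); lra. }
  assert (Hcase : Q = 2 /\ ln Q = ln 2 \/ 3 <= Q /\ ln 3 <= ln Q).
  { destruct HQc as [->|HQ3]. left; auto. right; split; auto. apply ln_le'; lra. }
  pose proof (key_ineq Q (ln Q) c (ln 2) (ln 3) Hcase Hc H2 H3) as K.
  unfold Hq, logb.
  assert (HB : g * ln (Q - 1) - g * ln g - (1 - g) * ln (1 - g)
               <= g * (2 * ln Q + / Q + ln 2 + ln 3 + 1)).
  { rewrite Hlng. nra. }
  assert (HB2 : g * (2 * ln Q + / Q + ln 2 + ln 3 + 1) < ln Q / (Q + 1)).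
  { rewrite Hg. apply (Rmult_lt_reg_r (Q * (Q + 1))); [nra|].
    replace ((Q - 1) * c / (Q * (Q + 1)) * (2 * ln Q + / Q + ln 2 + ln 3 + 1) * (Q * (Q + 1)))
      with ((Q - 1) * c * (2 * ln Q + / Q + ln 2 + ln 3 + 1)) by (field; lra).
    replace (ln Q / (Q + 1) * (Q * (Q + 1))) with (Q * ln Q) by (field; lra). lra. }
  apply (Rmult_lt_reg_r (ln Q)); auto.
  replace ((g * (ln (Q - 1) / ln Q) - g * (ln g / ln Q) - (1 - g) * (ln (1 - g) / ln Q)) * ln Q)
    with (g * ln (Q - 1) - g * ln g - (1 - g) * ln (1 - g)) by (field; lra).
  replace (1 / (Q + 1) * ln Q) with (ln Q / (Q + 1)) by (field; lra). lra.
Qed.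

Lemma Hq_cont Q y : 2 <= Q -> 0 < y < 1 -> continuous (Hq Q) y.
Proof.
  intros HQ Hy. apply (@ex_derive_continuous R_AbsRing R_NormedModule). eexists. apply Hq_derive; auto. apply lnQ_pos; auto.
Qed.

Section Main.
Variable Q : R.

Hypothesis HQ : 2 <= Q.

Definition dd (x : R) := (Q - 1) / (x * (Q + 1)).
Definition ff (x : R) := Mq Q ((Q - 1) / (x * (Q + 1))) - 1 / (x * (Q + 1)).

Lemma dd_bounds x : 1 <= x -> 0 < dd x /\ dd x < (Q - 1) / Q.
Proof.
  intros Hx. unfold dd. split. apply Rdiv_lt_0_compat; nra.
  apply (Rmult_lt_reg_r (x * (Q + 1) * Q)); [nra|].
  replace ((Q - 1) / (x * (Q + 1)) * (x * (Q + 1) * Q)) with ((Q - 1) * Q) by (field; nra).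
  replace ((Q - 1) / Q * (x * (Q + 1) * Q)) with ((Q - 1) * (x * (Q + 1))) by (field; nra).
  apply Rmult_lt_compat_l; nra.
Qed.

Lemma ff_eq x : ff x = Hq Q (gq Q (dd x)) - 1 / (x * (Q + 1)).
Proof. reflexivity. Qed.

Lemma ff_incr x1 x2 : 1 <= x1 -> x1 < x2 -> ff x1 < ff x2.
Proof.
  intros H1 H12. rewrite !ff_eq.
  destruct (dd_bounds x1 H1) as [A1 B1].
  destruct (dd_bounds x2 ltac:(lra)) as [A2 B2].
  assert (D : dd x2 < dd x1).
  { unfold dd. unfold Rdiv. apply Rmult_lt_compat_l; [lra|]. apply Rinv_lt_contravar; [apply Rmult_lt_0_compat; apply Rmult_lt_0_compat; lra | apply Rmult_lt_compat_r; lra]. }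
  assert (G : gq Q (dd x1) < gq Q (dd x2)) by (apply gq_decr; auto).
  destruct (gq_bounds Q (dd x1) HQ (conj A1 B1)).
  destruct (gq_bounds Q (dd x2) HQ (conj A2 B2)).
  assert (Hq Q (gq Q (dd x1)) < Hq Q (gq Q (dd x2))) by (apply Hq_incr; auto; lra).
  assert (1 / (x2 * (Q + 1)) < 1 / (x1 * (Q + 1))).
  { unfold Rdiv. apply Rmult_lt_compat_l; [lra|]. apply Rinv_lt_contravar; [apply Rmult_lt_0_compat; apply Rmult_lt_0_compat; lra | apply Rmult_lt_compat_r; lra]. }
  lra.
Qed.

Lemma ff_cont x : 1 <= x -> continuity_pt ff x.
Proof.
  intros Hx. apply continuity_pt_filterlim.
  change (continuous (fun x => Hq Q (gq Q (dd x)) - 1 / (x * (Q + 1))) x).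
  destruct (dd_bounds x Hx) as [A B].
  destruct (gq_bounds Q (dd x) HQ (conj A B)).
  apply c_minus.
  - apply (continuous_comp dd (fun d => Hq Q (gq Q d))).
    + apply (@ex_derive_continuous R_AbsRing R_NormedModule). unfold dd. auto_derive. nra.
    + apply (continuous_comp (gq Q) (Hq Q)). apply gq_cont. apply Hq_cont; auto.
      split; auto. assert ((Q - 1) / Q < 1) by (apply (Rmult_lt_reg_r Q); [lra|];
        unfold Rdiv; rewrite Rmult_assoc, Rinv_l; lra). lra.
  - apply (@ex_derive_continuous R_AbsRing R_NormedModule). auto_derive. nra.
Qed.

Lemma ff_pos : exists X, 1 <= X /\ 0 < ff X.
Proof.
  assert (G0 : gq Q 0 = (Q - 1) / Q).
  { unfold gq. replace ((Q - 1) * 0 * (1 - 0)) with 0 by ring. rewrite sqrt_0. field. lra. }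
  assert (Hc : continuity_pt (fun d => Hq Q (gq Q d)) 0).
  { apply continuity_pt_filterlim.
    apply (continuous_comp (gq Q) (Hq Q)). apply gq_cont. rewrite G0. apply Hq_cont; auto.
    split. apply Rdiv_lt_0_compat; lra.
    apply (Rmult_lt_reg_r Q); [lra|]. unfold Rdiv; rewrite Rmult_assoc, Rinv_l; lra. }
  destruct (Hc (1/2) ltac:(lra)) as [alp [Halp Hd]].
  set (X := Rmax 1 (2 * (Q - 1) / (alp * (Q + 1)))).
  assert (HX1 : 1 <= X) by apply Rmax_l.
  assert (HX2 : 2 * (Q - 1) / (alp * (Q + 1)) <= X) by apply Rmax_r.
  exists X. split; auto.
  destruct (dd_bounds X HX1) as [A B].
  assert (Hlt : dd X < alp).
  { unfold dd. apply (Rmult_lt_reg_r (X * (Q + 1))); [nra|].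
    replace ((Q - 1) / (X * (Q + 1)) * (X * (Q + 1))) with (Q - 1) by (field; nra).
    assert (2 * (Q - 1) / (alp * (Q + 1)) * (alp * (Q + 1)) <= X * (alp * (Q + 1)))
      by (apply Rmult_le_compat_r; nra).
    replace (2 * (Q - 1) / (alp * (Q + 1)) * (alp * (Q + 1))) with (2 * (Q - 1)) in H by (field; nra).
    nra. }
  specialize (Hd (dd X)). simpl in Hd. unfold R_dist in Hd.
  rewrite G0, Hq_top in Hd by auto.
  assert (Habs : Rabs (Hq Q (gq Q (dd X)) - 1) < 1/2).
  { apply Hd. split. split. exact I. lra. rewrite Rminus_0_r, Rabs_pos_eq; lra. }
  apply Rabs_def2 in Habs.
  rewrite ff_eq.
  assert (1 / (X * (Q + 1)) <= 1/3).
  { unfold Rdiv. rewrite !Rmult_1_l. replace (/3) with (/3) by auto.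
    apply Rinv_le_contravar; nra. }
  lra.
Qed.

Lemma main_R (HQc : Q = 2 \/ 3 <= Q) : exists c : R,
    (1 <= c /\ Mq Q ((Q - 1) / (c * (Q + 1))) = 1 / (c * (Q + 1)))
    /\ (forall x : R, 1 <= x ->
          Mq Q ((Q - 1) / (x * (Q + 1))) = 1 / (x * (Q + 1)) ->
          x = c)
    /\ 1 < c.
Proof.
  destruct ff_pos as [X [HX1 HX]].
  assert (F1 : ff 1 < 0) by (unfold ff; pose proof (f1_neg Q HQc); lra).
  assert (HX1' : 1 < X) by (destruct HX1 as [H|H]; auto; subst; lra).
  destruct (IVT_Rbar_incr ff 1 X (ff 1) (ff X) 0) as [c [Hc1 [Hc2 Hc]]].
  - apply is_lim_continuity. apply ff_cont; lra.
  - apply is_lim_continuity. apply ff_cont; lra.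
  - intros x H1 H2. simpl in *. apply ff_cont; lra.
  - simpl; auto.
  - simpl; split; auto.
  - simpl in *. exists c.
    assert (E : forall x, ff x = 0 <-> Mq Q ((Q - 1) / (x * (Q + 1))) = 1 / (x * (Q + 1))).
    { intros x; unfold ff; split; intros; lra. }
    split; [split; [lra| apply E; auto]|]. split; [|lra].
    intros x Hx Hm. apply E in Hm.
    destruct (Rtotal_order x c) as [H|[H|H]]; auto.
    + pose proof (ff_incr x c Hx H); lra.
    + pose proof (ff_incr c x ltac:(lra) H); lra.
Qed.

End Main.

Theorem corollaryA2 (q : nat) (hq : prime_power q) :
  exists c : R,
    (1 <= c /\ Mq (INR q) ((INR q - 1) / (c * (INR q + 1))) = 1 / (c * (INR q + 1)))
    /\ (forall x : R, 1 <= x ->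
          Mq (INR q) ((INR q - 1) / (x * (INR q + 1))) = 1 / (x * (INR q + 1)) ->
          x = c)
    /\ 1 < c.
Proof.
  assert (HQc : INR q = 2 \/ 3 <= INR q).
  { destruct hq as [p [k [Hp [Hk ->]]]].
    apply prime_ge_2 in Hp.
    assert (H2 : (2 <= p)%nat) by lia.
    assert (Hpk : (p <= p ^ k)%nat).
    { replace p with (p ^ 1)%nat at 1 by apply Nat.pow_1_r. apply Nat.pow_le_mono_r; lia. }
    destruct (Nat.eq_dec (p ^ k) 2) as [E|E].
    - left. rewrite E. reflexivity.
    - right. replace 3 with (INR 3) by (simpl; ring). apply le_INR. lia. }
  apply main_R; auto. lra.
Qed.
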